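(* Fix $p\in(0,1)$. Under the Alternating Path Randomized Design with parameter $p$, for every component $\mathcal{P}_i=(v_{i,1},\dots,v_{i,k(i)+1})$ of the decomposition of the disagreement set and every $j\in\{1,\dots,k(i)\}$, \[\mathbb{P}(W_{i,j}=1)=\begin{cases}\dfrac{1-(-p)^{j-1}}{(1+p)^2}, & \text{if }\mathcal{P}_i\text{ is a cycle and } j=k(i),\\[2mm] \dfrac{p}{p+1}, & \text{otherwise.}\end{cases}\]
   Context: Setting: $2N$ agents; $\mathbb{M}^t,\mathbb{M}^c$ are one-to-one matchings (sets of unordered pairs of distinct agents, each agent in at most one pair). The disagreement set $\triangle\mathbb{M}^{(t,c)}=(\mathbb{M}^t\cup\mathbb{M}^c)\setminus(\mathbb{M}^t\cap\mathbb{M}^c)$, viewed as a graph, has connected components $\mathcal{P}_1,\dots,\mathcal{P}_m$, each of which is an alternating path or alternating cycle: a sequence of agents $(v_{i,1},\dots,v_{i,k(i)+1})$ whose consecutive pairs $e_{i,j}=(v_{i,j},v_{i,j+1})$, $j=1,\dots,k(i)$, are the edges of the component, alternating between $\mathbb{M}^t\setminus\mathbb{M}^c$ and $\mathbb{M}^c\setminus\mathbb{M}^t$; it is a cycle if $v_{i,1}=v_{i,k(i)+1}$ and a path otherwise (each component is listed in a fixed orientation and starting point). Alternating Path Randomized Design with parameter $p$: it produces indicators $W_{i,j}\in\{0,1\}$ (edge $e_{i,j}$ is realized iff $W_{i,j}=1$), independently across components $i$. Within $\mathcal{P}_i$: $\mathbb{P}(W_{i,1}=1)=p/(1+p)$;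 for $2\le j\le k(i)$ if $\mathcal{P}_i$ is a path, and for $2\le j\le k(i)-1$ if $\mathcal{P}_i$ is a cycle, conditionally on $W_{i,1},\dots,W_{i,j-1}$ we have $W_{i,j}=1$ with probability $p$ if $W_{i,j-1}=0$ and $W_{i,j}=0$ if $W_{i,j-1}=1$; if $\mathcal{P}_i$ is a cycle, the last indicator is deterministic given the others: $W_{i,k(i)}=1$ if $W_{i,1}=0$ and $W_{i,k(i)-1}=0$, and $W_{i,k(i)}=0$ otherwise. *)

(* Defs.v *)
From HB Require Import structures.
From mathcomp Require Import all_boot all_order all_algebra.
Set Implicit Arguments. Unset Strict Implicit. Unset Printing Implicit Defensive.
Import Order.TTheory GRing.Theory Num.Theory.
Local Open Scope ring_scope.

(* A component P_i of the disagreement set is described by its number of edges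
   k = k(i) and whether it is a cycle.  Its realization indicators
   (W_{i,1}, ..., W_{i,k}) are stored in a k.-tuple bool, where the 1-based
   indicator W_{i,n} is [nth false t n.-1]. *)
Definition Wn (k : nat) (t : k.-tuple bool) (n : nat) : bool := nth false t n.-1.

Definition first_prob {R : realFieldType} (p : R) (b : bool) : R :=
  if b then p / (1 + p) else 1 / (1 + p).

(* conditional probability of W_{i,j} = b given W_{i,j-1} = a, for the
   non-deterministic steps *)
Definition step_prob {R : realFieldType} (p : R) (a b : bool) : R :=
  if a then (if b then 0 else 1) else (if b then p else 1 - p).

Definition last_rand (k : nat) (cyc : bool) : nat := if cyc then k.-1 else k.

(* Alternating Path Randomized Design, joint law of the indicators of one
   component (chain rule for the conditional description in the paper). *)
Definition comp_pmf {R : realFieldType} (p : R) (k : nat) (cyc : bool)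
    (t : k.-tuple bool) : R :=
  first_prob p (Wn t 1) *
  (\prod_(2 <= j < (last_rand k cyc).+1) step_prob p (Wn t j.-1) (Wn t j)) *
  (if cyc then (if Wn t k == (~~ Wn t 1 && ~~ Wn t k.-1) then 1 else 0) else 1).

Definition outcome (m : nat) (k : 'I_m -> nat) :=
  {dffun forall i : 'I_m, (k i).-tuple bool}.

Definition design_pmf {R : realFieldType} (p : R) (m : nat) (k : 'I_m -> nat)
    (cyc : 'I_m -> bool) (W : outcome k) : R :=
  \prod_(i < m) comp_pmf p (cyc i) (W i).

Definition design_prob {R : realFieldType} (p : R) (m : nat) (k : 'I_m -> nat)
    (cyc : 'I_m -> bool) (E : pred (outcome k)) : R :=
  \sum_(W : outcome k | E W) design_pmf p cyc W.

(* Main.v *)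
Require Import Defs.
From HB Require Import structures.
From mathcomp Require Import all_boot all_order all_algebra.
From mathcomp Require Import ring lra.
Import Order.TTheory GRing.Theory Num.Theory.
Local Open Scope ring_scope.
Lemma sum_prod_dffun (R : comRingType) (I : finType) (T_ : I -> finType)
  (F : forall i, T_ i -> R) :
  \sum_(W : {dffun forall i : I, T_ i}) \prod_i F i (W i) = \prod_i \sum_(t : T_ i) F i (t).
Proof.
rewrite (reindex (@dffun_of_fprod I T_)); last exact/onW_bij/dffun_of_fprod_bij.
have -> : \sum_(j : fprod T_) \prod_i F i (dffun_of_fprod j i)
   = \sum_(j : fprod T_) \prod_(i in I) [ffun t => F i t] (j i).
  by apply: eq_bigr => f _; apply: eq_bigr => i _; rewrite !ffunE.
rewrite (@big_fprod R 0 1 *%R +%R I T_ (fun i => [ffun t => F i t])).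
rewrite -(bigA_distr_big_dep (tagged_with T_) (fun i => untag 0 ([ffun t => F i t]))). 
apply: eq_bigr => i _.
have := @big_tag R 0 +%R I T_ (fun i => [ffun t => F i t]) i. move=> <-.
apply: eq_bigr => t _. by rewrite ffunE.
Qed.
Lemma sum_rcons (R : comRingType) n (F : n.+1.-tuple bool -> R) :
  \sum_(t : n.+1.-tuple bool) F t =
  \sum_(u : n.-tuple bool) \sum_(b : bool) F [tuple of rcons u b].
Proof.
rewrite pair_big /=.
pose f (ub : n.-tuple bool * bool) : n.+1.-tuple bool := [tuple of rcons ub.1 ub.2].
pose g (t : n.+1.-tuple bool) : n.-tuple bool * bool :=
  ([tuple of belast (head false t) [tuple of behead t]], last (head false t) (behead t)).
rewrite (reindex f) //=.
exists g => [[u b] _|t _].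
  rewrite /f /g /=; congr pair.
    apply: val_inj => /=; case: u => [[|x s] /= _] //.
    by rewrite belast_rcons.
  by case: u => [[|x s] /= _] //; rewrite last_rcons.
apply: val_inj => /=; case/tupleP: t => x u /=.
by rewrite -lastI.
Qed.

Lemma sum_tuple1 (R : comRingType) (F : 1.-tuple bool -> R) :
  \sum_(t : 1.-tuple bool) F t = \sum_(b : bool) F [tuple of [:: b]].
Proof.
rewrite sum_rcons (big_pred1 [tuple]) //=; last by move=> u; apply/esym/eqP; exact: tuple0.
by apply: eq_bigr => b _; congr F; exact: val_inj.
Qed.

Lemma last_take (s : seq bool) n : (0 < n <= size s)%N ->
  last false (take n s) = nth false s n.-1.
Proof.
case: n => // n /= hn.
by rewrite -nth_last size_takel // nth_take.
Qed.

Section Chain.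
Variables (R : realFieldType) (p : R).
Hypothesis hp0 : 0 < p.

Fixpoint w (a : bool) (s : seq bool) : R :=
  if s is b :: s' then step_prob p a b * w b s' else 1.
Definition mu (s : seq bool) : R :=
  if s is x :: s' then first_prob p x * w x s' else 1.

Lemma w_rcons a s b : w a (rcons s b) = w a s * step_prob p (last a s) b.
Proof. by elim: s a => [|x s IH] a /=; rewrite ?mul1r ?mulr1 // IH mulrA. Qed.

Lemma mu_rcons s b : s != [::] -> mu (rcons s b) = mu s * step_prob p (last false s) b.
Proof. by case: s => [|x s] //= _; rewrite w_rcons mulrA. Qed.

Lemma link k (t : k.-tuple bool) n : (0 < n <= k)%N ->
  first_prob p (Wn t 1) * \prod_(2 <= j < n.+1) step_prob p (Wn t j.-1) (Wn t j)
  = mu (take n t).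
Proof.
elim: n => [|n IH] // hn.
case: n IH hn => [_|n IH] hn.
  rewrite big_geq // mulr1.
  have -> : take 1 t = [:: nth false t 0].
    case: t hn => [[|x s] sz] /=; first by rewrite -(eqP sz).
    by rewrite take0.
  by rewrite /= mulr1.
rewrite big_nat_recr //= mulrA IH; last by case/andP: hn => _ /ltnW ->.
have hs : (n.+1 < size t)%N by rewrite size_tuple; case/andP: hn.
rewrite (take_nth false hs) mu_rcons; last first.
  by rewrite -size_eq0 size_takel // ltnW.
by rewrite last_take //= ltnW.
Qed.


Lemma sum_step a : \sum_(c : bool) step_prob p a c = 1.
Proof. by rewrite big_bool; case: a => /=; rewrite ?addr0 ?subrK ?add0r // addrC subrK. Qed.

Definition D (h : bool -> R) n (b : bool) :=
  \sum_(t : n.-tuple bool) mu t * h (nth false t 0) * (last false t == b)%:R.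

Lemma D1 h b : D h 1 b = first_prob p b * h b.
Proof.
rewrite /D sum_tuple1 big_bool /=; case: b => /=; rewrite !mulr1 ?mulr0 ?add0r ?addr0 //.
Qed.

Lemma D_rec h n b : (0 < n)%N ->
  D h n.+1 b = \sum_(a : bool) D h n a * step_prob p a b.
Proof.
move=> hn; rewrite /D sum_rcons.
under [RHS]eq_bigr => a _ do rewrite big_distrl /=.
rewrite [RHS]exchange_big /=; apply: eq_bigr => u _.
have hu : [::] != u :> seq bool by rewrite eq_sym -size_eq0 size_tuple -lt0n.
have h0 : forall c, nth false (rcons u c) 0 = nth false u 0.
  by move=> c; rewrite nth_rcons size_tuple hn.
under eq_bigr => c _ do rewrite mu_rcons 1?eq_sym // h0 last_rcons.
rewrite !big_bool /=; case: b; case: (last false u) => /=;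
  rewrite !mulr1 !mulr0 ?addr0 ?add0r ?mul0r ?addr0 //; by rewrite mulrAC.
Qed.

Lemma D_stat n b : (0 < n)%N -> D (fun _ => 1) n b = first_prob p b.
Proof.
elim: n b => [|n IH] b // _.
case: n IH => [|n] IH; first by rewrite D1 mulr1.
rewrite D_rec // big_bool !IH //.
have hp : 1 + p != 0 by rewrite lt0r_neq0 // ltr_pwDr // ltr01.
case: b => /=; rewrite /first_prob /=; field => //.
Qed.

Lemma D_neg n b :
  D (fun x => (~~ x)%:R) n.+1 b =
  (if b then p * (1 - (- p) ^+ n) else 1 + p * (- p) ^+ n) / (1 + p) ^+ 2.
Proof.
have hp : 1 + p != 0 by rewrite lt0r_neq0 // ltr_pwDr // ltr01.
elim: n b => [|n IH] b.
  rewrite D1 expr0; case: b; rewrite /first_prob /=; field => //.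
rewrite D_rec // big_bool !IH /= [(- p) ^+ n.+1]exprS.
case: b; rewrite /=; field => //.
Qed.

Lemma tail n (phi : seq bool -> R) : (0 < n)%N ->
  (forall (u : n.-tuple bool) c, phi (rcons u c) = phi u) ->
  \sum_(t : n.+1.-tuple bool) mu t * phi t = \sum_(u : n.-tuple bool) mu u * phi u.
Proof.
move=> hn hphi; rewrite sum_rcons; apply: eq_bigr => u _ /=.
have hu : u != [::] :> seq bool by rewrite -size_eq0 size_tuple -lt0n.
under eq_bigr => c _ do rewrite mu_rcons // hphi mulrAC.
by rewrite -big_distrr /= sum_step mulr1.
Qed.

Lemma total n : (0 < n)%N -> \sum_(t : n.-tuple bool) mu t = 1.
Proof.
elim: n => [|n IH] // _.
case: n IH => [|n] IH.
  rewrite sum_tuple1 big_bool /= !mulr1 /first_prob.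
  have hp : 1 + p != 0 by rewrite lt0r_neq0 // ltr_pwDr // ltr01.
  by field.
have := @tail n.+1 (fun _ => 1) isT (fun _ _ => erefl).
under eq_bigr do rewrite mulr1.
move=> ->; under eq_bigr do rewrite mulr1.
exact: IH.
Qed.

Lemma marg n j : (0 < j <= n)%N ->
  \sum_(t : n.-tuple bool) mu t * (nth false t j.-1)%:R = first_prob p true.
Proof.
elim: n => [|n IH] hj; first by case/andP: hj => /leq_trans h /h.
case: (ltngtP j n.+1) hj => [hlt|hgt|->] hj.
- have hn : (0 < n)%N by case/andP: hj => /leq_trans h _; apply: h.
  rewrite (@tail n (fun t => (nth false t j.-1)%:R)) //.
    by apply: IH; case/andP: hj => -> _.
  move=> u c; rewrite nth_rcons size_tuple.
  case/andP: hj => h0 _; by rewrite prednK // -ltnS hlt.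
- by case/andP: hj.
- rewrite -(@D_stat n.+1 true) //; apply: eq_bigr => t _ /=.
  by rewrite mulr1 -nth_last size_tuple eqb_id.
Qed.

Lemma comp_path k (t : k.-tuple bool) :
  (0 < k)%N -> comp_pmf p false t = mu t.
Proof.
move=> hk; rewrite /comp_pmf /= mulr1 link; last by rewrite hk leqnn.
by rewrite take_oversize ?size_tuple.
Qed.

Lemma comp_cyc n (G : seq bool -> R) : (0 < n)%N ->
  \sum_(t : n.+1.-tuple bool) comp_pmf p true t * G t =
  \sum_(u : n.-tuple bool) mu u * G (rcons u (~~ nth false u 0 && ~~ nth false u n.-1)).
Proof.
move=> hn; rewrite sum_rcons; apply: eq_bigr => u _.
rewrite /comp_pmf /last_rand /=.
have hl : forall c, first_prob p (Wn [tuple of rcons u c] 1) *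
     \prod_(2 <= j < n.+1) step_prob p (Wn [tuple of rcons u c] j.-1)
          (Wn [tuple of rcons u c] j) = mu u.
  move=> c; rewrite link; last by rewrite hn leqnSn.
  have -> : take n [tuple of rcons u c] = u :> seq bool by rewrite /= -cats1 take_size_cat ?size_tuple.
  done.
have w1 : forall c, Wn [tuple of rcons u c] 1 = nth false u 0.
  by move=> c; rewrite /Wn /= nth_rcons size_tuple hn.
have wn : forall c, Wn [tuple of rcons u c] n = nth false u n.-1.
  by move=> c; rewrite /Wn /= nth_rcons size_tuple; case: n hn u {hl w1} => // n _ u /=; rewrite ltnSn.
have wk : forall c, Wn [tuple of rcons u c] n.+1 = c.
  by move=> c; rewrite /Wn /= nth_rcons size_tuple ltnn eqxx.
under eq_bigr => c _ do rewrite hl w1 wn wk.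
rewrite big_bool; case: (~~ nth false u 0 && ~~ nth false u n.-1) => /=;
  by rewrite ?mulr1 ?mulr0 ?mul0r ?addr0 ?add0r.
Qed.

Lemma total_comp k (cyc : bool) :
  (if cyc then (4 <= k)%N && ~~ odd k else (1 <= k)%N) ->
  \sum_(t : k.-tuple bool) comp_pmf p cyc t = 1.
Proof.
case: cyc.
  case: k => [|n] // /andP[h4 _].
  have hn : (0 < n)%N := leq_trans (isT : (1 <= 3)%N) h4.
  have := @comp_cyc n (fun _ => 1) hn; rewrite /=.
  under eq_bigr do rewrite mulr1.
  move=> ->; under eq_bigr do rewrite mulr1.
  exact: total.
move=> hk; under eq_bigr do rewrite comp_path //.
exact: total.
Qed.

Lemma marg_comp k (cyc : bool) j :
  (if cyc then (4 <= k)%N && ~~ odd k else (1 <= k)%N) -> (1 <= j <= k)%N ->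
  \sum_(t : k.-tuple bool) comp_pmf p cyc t * (Wn t j)%:R =
  (if cyc && (j == k)
   then (1 - (- p) ^+ j.-1) / (1 + p) ^+ 2
   else p / (p + 1)).
Proof.
have hp : 1 + p != 0 by rewrite lt0r_neq0 // ltr_pwDr // ltr01.
case: cyc => /=; last first.
  move=> hk hj; under eq_bigr do rewrite comp_path //.
  by rewrite /Wn marg // /first_prob addrC.
case: k => [|n] // /andP[h4 _] hj.
have hn : (0 < n)%N := leq_trans (isT : (1 <= 3)%N) h4.
have := @comp_cyc n (fun t => (nth false t j.-1)%:R) hn; rewrite /= => ->.
case: (ltnP j n.+1) => hjlt.
  have hjn : (j <= n)%N by [].
  rewrite (ltn_eqF hjlt) [p + 1]addrC -[p / (1 + p)]/(first_prob p true) -(@marg n j); last by case/andP: hj => -> _.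
  apply: eq_bigr => u _; rewrite nth_rcons size_tuple.
  by case/andP: hj => h0 _; have -> : (j.-1 < n)%N by rewrite prednK.
have -> : j = n.+1 by apply/eqP; rewrite eqn_leq hjlt andbT; case/andP: hj.
rewrite eqxx.
clear hj h4 hjlt; case: n hn => [|n] // _.
  have -> : 1 - (- p) ^+ n.+2.-1 = 1 + p * (- p) ^+ n by rewrite /= exprS; ring.
  have -> : (1 + p * (-p)^+n) / (1+p)^+2 = (if false then p * (1 - (- p) ^+ n) else 1 + p * (- p) ^+ n) / (1 + p) ^+ 2 by [].
  rewrite -(D_neg n false) /D; apply: eq_bigr => u _.
  rewrite nth_rcons size_tuple ltnn eqxx -nth_last size_tuple /=.
  by case: (nth false u 0); case: (nth false u n); rewrite /= ?mulr1 ?mulr0.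
Qed.

End Chain.

Theorem lemma1 (R : realFieldType) (p : R) (hp0 : 0 < p) (hp1 : p < 1)
  (m : nat) (k : 'I_m -> nat) (cyc : 'I_m -> bool)
  (hk : forall i : 'I_m, if cyc i then (4 <= k i)%N && ~~ odd (k i) else (1 <= k i)%N)
  (i : 'I_m) (j : nat) (hj : (1 <= j <= k i)%N) :
  design_prob p cyc (fun W : outcome k => Wn (W i) j) =
  (if cyc i && (j == k i)
   then (1 - (- p) ^+ j.-1) / (1 + p) ^+ 2
   else p / (p + 1)).
Proof.
rewrite /design_prob /design_pmf big_mkcond /=.
have step1 : forall W : outcome k,
  (if Wn (W i) j then \prod_(i' < m) comp_pmf p (cyc i') (W i') else 0) =
  \prod_(i' < m) (comp_pmf p (cyc i') (W i') * (if i' == i then (Wn (W i') j)%:R else 1)).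
  move=> W; rewrite [RHS]big_split /= [X in _ = _ * X](bigD1 i) //= eqxx.
  have -> : \prod_(i0 < m | i0 != i) (if i0 == i then (Wn (W i0) j)%:R else 1) = 1 :> R by apply: big1 => i0 /negbTE ->.
  by case: (Wn (W i) j); rewrite ?mulr1 ?mulr0.
under eq_bigr do rewrite step1.
rewrite (@sum_prod_dffun R _ _ (fun i' (t : (k i').-tuple bool) =>
   comp_pmf p (cyc i') t * (if i' == i then (Wn t j)%:R else 1))).
rewrite (bigD1 i) //=.
rewrite [X in _ * X](_ : _ = 1) ?mulr1.
  under eq_bigr do rewrite eqxx.
  exact: marg_comp.
apply: big1 => i' /negbTE hi.
under eq_bigr do rewrite hi mulr1.
exact: total_comp.
Qed.
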